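(* Let $(X,\mathscr{R},g)$ be a closed reversible reaction network with reaction energies $g\in\mathbb{R}^{\mathscr{R}}$. Then $(X,\mathscr{R},g)$ is thermodynamic if and only if it contains no perpetuum mobile.
   Context: A reaction network (RN) $(X,\mathscr{R})$ consists of a finite non-empty set $X$ of species and a finite non-empty set $\mathscr{R}$ of reactions. Each reaction $r$ is given by stoichiometric coefficients $s^-_{xr},s^+_{xr}\in\mathbb{N}_0$. The stoichiometric matrix $S\in\mathbb{Z}^{X\times\mathscr{R}}$ has entries $S_{xr}=s^+_{xr}-s^-_{xr}$. The RN is closed if every reaction $r$ has $x,y$ with $S_{xr}<0<S_{yr}$. The reverse $\bar r$ of $r$ has $s^-_{x\bar r}=s^+_{xr}$ and $s^+_{x\bar r}=s^-_{xr}$. The RN is reversible if $r\in\mathscr{R}$ implies $\bar r\in\mathscr{R}$. $(X,\mathscr{R},g)$ is thermodynamic if $g\in(\ker S)^\perp$. A perpetuum mobile is a vector $v\in\mathbb{R}^{\mathscr{R}}$ with all of the following: - $v\ge0$ and $v\ne0$; - $Sv=0$; - $\langle g,v\rangle\neq0$. *)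

(* Defs.v *)
From mathcomp Require Import all_boot all_order all_algebra.
Set Implicit Arguments. Unset Strict Implicit. Unset Printing Implicit Defensive.
Import Order.TTheory GRing.Theory Num.Theory.
Local Open Scope ring_scope.

(* A reaction network: species type X and reaction type Rc (finite types),
   with stoichiometric coefficients sm x r = s^-_{xr}, sp x r = s^+_{xr}. *)

Definition stoich (X Rc : finType) (sm sp : X -> Rc -> nat) (x : X) (r : Rc) : int :=
  (sp x r)%:Z - (sm x r)%:Z.

Definition closed_RN (X Rc : finType) (sm sp : X -> Rc -> nat) : Prop :=
  forall r : Rc, exists x y : X,
    (stoich sm sp x r < 0)%R /\ (0 < stoich sm sp y r)%R.

Definition reversible_RN (X Rc : finType) (sm sp : X -> Rc -> nat) : Prop :=
  forall r : Rc, exists rb : Rc,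
    forall x : X, sm x rb = sp x r /\ sp x rb = sm x r.

Definition in_kerS (R : realFieldType) (X Rc : finType) (sm sp : X -> Rc -> nat)
  (v : Rc -> R) : Prop :=
  forall x : X, \sum_(r : Rc) (stoich sm sp x r)%:~R * v r = 0.

Definition dotR (R : realFieldType) (Rc : finType) (g v : Rc -> R) : R :=
  \sum_(r : Rc) g r * v r.

Definition thermodynamic (R : realFieldType) (X Rc : finType)
  (sm sp : X -> Rc -> nat) (g : Rc -> R) : Prop :=
  forall v : Rc -> R, in_kerS sm sp v -> dotR g v = 0.

Definition perpetuum_mobile (R : realFieldType) (X Rc : finType)
  (sm sp : X -> Rc -> nat) (g : Rc -> R) (v : Rc -> R) : Prop :=
  (forall r, 0 <= v r) /\ (exists r, v r != 0) /\ in_kerS sm sp v /\ dotR g v != 0.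

(* Main.v *)
Require Import Defs.
From mathcomp Require Import all_boot all_order all_algebra.
Import Order.TTheory GRing.Theory Num.Theory.
Local Open Scope ring_scope.

Lemma sum_delta (R : realFieldType) (Rc : finType) (f : Rc -> R) (r : Rc) (a : R) :
  \sum_(s : Rc) f s * ((r == s)%:R * a) = f r * a.
Proof.
rewrite (bigD1 r) //= eqxx mul1r big1 ?addr0 // => s /negbTE.
by rewrite eq_sym => ->; rewrite mul0r mulr0.
Qed.

Lemma transfer (R : realFieldType) (Rc : finType) (rev : Rc -> Rc) (v f : Rc -> R) :
  (forall r, f (rev r) = - f r) ->
  \sum_(s : Rc) f s * (\sum_(r : Rc) (if 0 <= v r then (r == s)%:R * v r
                                     else (rev r == s)%:R * (- v r)))
  = \sum_(r : Rc) f r * v r.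
Proof.
move=> Hf.
under eq_bigr => s _ do rewrite mulr_sumr.
rewrite exchange_big /=; apply: eq_bigr => r _.
case: (0 <= v r); first by rewrite sum_delta.
by rewrite sum_delta Hf mulrNN.
Qed.

Theorem proposition2 (R : realFieldType) (X Rc : finType)
  (sm sp : X -> Rc -> nat) (g : Rc -> R) :
  (0 < #|X|)%N -> (0 < #|Rc|)%N ->
  closed_RN sm sp -> reversible_RN sm sp ->
  (thermodynamic sm sp g <-> ~ exists v : Rc -> R, perpetuum_mobile sm sp g v).
Proof.
move=> _ _ _ Hrev; split.
  move=> Ht [v [_ [_ [Hk Hd]]]].
  by move: Hd; rewrite Ht // eqxx.
move=> Hno.
have nnk : forall u : Rc -> R, (forall r, 0 <= u r) -> in_kerS sm sp u -> dotR g u = 0.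
  move=> u Hu Hk; apply/eqP; apply: contraT => Hd.
  have [r Hr] : exists r, u r != 0.
    case: (pickP (fun r => u r != 0)) => [r Hr|H]; first by exists r.
    move: Hd; rewrite /dotR big1 ?eqxx // => r _.
    by have /negbFE/eqP -> := H r; rewrite mulr0.
  by exfalso; apply: Hno; exists u; split=> //; split; [exists r | split].
have [rev Hrv] := fin_all_exists Hrev.
have HS : forall x r, (stoich sm sp x (rev r))%:~R = - (stoich sm sp x r)%:~R :> R.
  move=> x r; rewrite /stoich !(proj1 (Hrv r x)) !(proj2 (Hrv r x)).
  by rewrite -mulrNz opprB.
have Hg : forall r, g (rev r) = - g r.
  move=> r.
  pose u := fun s : Rc => (r == s)%:R * 1 + (rev r == s)%:R * (1 : R).
  have : dotR g u = 0.
    apply: nnk.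
      by move=> s; rewrite /u; apply: addr_ge0; rewrite mulr1 ler0n.
    move=> x; rewrite /u.
    under eq_bigr do rewrite mulrDr.
    by rewrite big_split /= !sum_delta HS !mulr1 addrN.
  rewrite /dotR /u.
  under eq_bigr do rewrite mulrDr.
  rewrite big_split /= !sum_delta !mulr1 => /eqP.
  by rewrite addr_eq0 => /eqP ->; rewrite opprK.
move=> v Hk.
pose w := fun s : Rc => \sum_(r : Rc) (if 0 <= v r then (r == s)%:R * v r
                                     else (rev r == s)%:R * (- v r)).
have Hw : forall s, 0 <= w s.
  move=> s; apply: sumr_ge0 => r _; case: ifP => H.
    by apply: mulr_ge0; rewrite ?ler0n.
  apply: mulr_ge0; rewrite ?ler0n // oppr_ge0.
  by apply: ltW; rewrite ltNge H.
have Hkw : in_kerS sm sp w.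
  move=> x; rewrite /w (@transfer R Rc rev v (fun r => (stoich sm sp x r)%:~R)) ; [exact: Hk | move=> r; exact: HS].
have := nnk w Hw Hkw.
by rewrite /dotR /w transfer.
Qed.
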